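(* Let $V\subseteq\mathbb{R}^d$ be a finite set containing at least two distinct points, and let $p\in V$. Then $$\Pr_{(i,\theta)\sim D_2(V)}\big[\theta\text{ lies between }0\text{ and }p_i\big]\le\frac{2\|p\|_2^2}{L_2(V)}.$$
   Context: For each dimension $i$, let $\ell_i=\min_{v\in V}v_i$, $u_i=\max_{v\in V}v_i$, and let $\mathcal{I}_i$ be the set of consecutive intervals $[a,b]$ (with $a<b$) into which $[\ell_i,u_i]$ is partitioned by the projections $\{v_i:v\in V\}$. Let $\mathcal{I}_{\mathrm{all}}(V)=\{(i,[a,b]):i\in[d],[a,b]\in\mathcal{I}_i\}$ and $L_2(V)=\sum_{(i,[a,b])\in\mathcal{I}_{\mathrm{all}}(V)}(b-a)^2$. The distribution $D_2(V)$ over threshold cuts $(i,\theta)$: choose $(i,[a,b])\in\mathcal{I}_{\mathrm{all}}(V)$ with probability $(b-a)^2/L_2(V)$, then choose $\theta\in[a,b]$ with density $P_{a,b}(\theta)=\frac{4}{(b-a)^2}\min(\theta-a,b-\theta)$. The event in the claim is that the cut $(i,\theta)$ separates the origin from $p$. *)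

(* Defs.v *)
From Stdlib Require Import Reals.
From Coquelicot Require Hierarchy RInt.
From mathcomp Require Import all_boot all_order all_algebra.
From mathcomp Require Import Rstruct.
Set Implicit Arguments. Unset Strict Implicit. Unset Printing Implicit Defensive.
Import Order.TTheory GRing.Theory Num.Theory.
Local Open Scope ring_scope.

Definition projs (d : nat) (V : seq 'rV[R]_d) (i : 'I_d) : seq R :=
  sort <=%R (undup [seq (v : 'rV[R]_d) ord0 i | v <- V]).

(* I_i : consecutive intervals [a,b] (a<b) partitioning [l_i,u_i] *)
Definition intervals (d : nat) (V : seq 'rV[R]_d) (i : 'I_d) : seq (R * R) :=
  let s := projs V i in zip s (behead s).

Definition L2 (d : nat) (V : seq 'rV[R]_d) : R :=
  \sum_(i < d) \sum_(ab <- intervals V i) (ab.2 - ab.1) ^+ 2.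

Definition Pab (a b theta : R) : R :=
  4 / (b - a) ^+ 2 * Num.min (theta - a) (b - theta).

(* Pr_{theta ~ P_{a,b}}[theta in [lo,hi]] = integral of the density over
   [a,b] ∩ [lo,hi] (0 if the intersection is empty) *)
Definition mass (a b lo hi : R) : R :=
  let c := Num.max a lo in let e := Num.min b hi in
  if c <= e then @RInt.RInt Hierarchy.R_CompleteNormedModule (Pab a b) c e else 0.

Definition prob_between (d : nat) (V : seq 'rV[R]_d) (p : 'rV[R]_d) : R :=
  \sum_(i < d) \sum_(ab <- intervals V i)
     ((ab.2 - ab.1) ^+ 2 / L2 V) *
     mass ab.1 ab.2 (Num.min 0 (p ord0 i)) (Num.max 0 (p ord0 i)).

Definition sqnorm (d : nat) (p : 'rV[R]_d) : R := \sum_(i < d) p ord0 i ^+ 2.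

(* Main.v *)
Require Import Defs.
From Stdlib Require Import Reals Lra FunctionalExtensionality.
From Coquelicot Require Import Coquelicot.
Local Open Scope R_scope.
Lemma rmin_abs x y : Rmin x y = (x + y - Rabs (x - y)) / 2.
Proof. unfold Rmin, Rabs; destruct (Rle_dec x y); destruct (Rcase_abs (x-y)); lra. Qed.

Lemma cont_tri (K a b z : R) : continuous (fun t => K * Rmin (t-a) (b-t)) z.
Proof.
  apply continuous_ext with (f := fun t => K * (((t-a) + (b-t) - Rabs ((t-a) - (b-t))) / 2)).
  { intros t. now rewrite rmin_abs. }
  apply continuous_ext with (f := fun t => K*(b-a)/2 + (-K/2) * Rabs ((t-a) - (b-t))).
  { intros t. change (K*(b-a)/2 + (-K/2) * Rabs ((t-a) - (b-t)) = K * (((t-a) + (b-t) - Rabs ((t-a) - (b-t))) / 2)). field. }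
  apply (continuous_plus (fun _ => K*(b-a)/2)). apply continuous_const.
  apply (continuous_mult (fun _ => -K/2)). apply continuous_const.
  apply continuous_Rabs_comp. apply (@ex_derive_continuous R_AbsRing R_NormedModule (fun t => (t-a)-(b-t))). auto_derive. auto.
Qed.

Lemma int_lin1 (K a c e : R) : RInt (fun t => K * (t - a)) c e = K * ((e-a)^2 - (c-a)^2) / 2.
Proof.
  apply is_RInt_unique.

  replace (K * ((e-a)^2 - (c-a)^2) / 2) with (minus (K * (e-a)^2/2) (K*(c-a)^2/2)).
  2: { unfold minus, plus, opp; simpl; field. }
  apply (is_RInt_derive (fun t => K * (t-a)^2/2)).
  - intros x _. auto_derive; auto. field.
  - intros x _. apply (@ex_derive_continuous R_AbsRing R_NormedModule). auto_derive. auto.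
Qed.

Lemma int_lin2 (K b c e : R) : RInt (fun t => K * (b - t)) c e = K * ((b-c)^2 - (b-e)^2) / 2.
Proof.
  apply is_RInt_unique.
  replace (K * ((b-c)^2 - (b-e)^2) / 2) with (minus (- K * (b-e)^2/2) (- K*(b-c)^2/2)).
  2: { unfold minus, plus, opp; simpl; field. }
  apply (is_RInt_derive (fun t => - K * (b-t)^2/2)).
  - intros x _. auto_derive; auto. field.
  - intros x _. apply (@ex_derive_continuous R_AbsRing R_NormedModule). auto_derive. auto.
Qed.

Lemma key0 (a b c e K : R) : a <= c -> c <= e -> e <= b -> 0 <= K ->
  (c = a \/ e = b \/ c = e) ->
  RInt (fun t => K * Rmin (t-a) (b-t)) c e <= K * (e-c)^2/2.
Proof.
  intros hac hce heb hK [H|[H|H]].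
  - subst c. eapply Rle_trans.
    apply (RInt_le _ (fun t => K * (t - a))); auto.
    + apply (@ex_RInt_continuous R_CompleteNormedModule); intros; apply cont_tri.
    + apply (@ex_RInt_continuous R_CompleteNormedModule); intros.
      apply (@ex_derive_continuous R_AbsRing R_NormedModule). auto_derive. auto.
    + intros x _. apply Rmult_le_compat_l; auto. apply Rmin_l.
    + rewrite int_lin1. right. field.
  - subst e. eapply Rle_trans.
    apply (RInt_le _ (fun t => K * (b - t))); auto.
    + apply (@ex_RInt_continuous R_CompleteNormedModule); intros; apply cont_tri.
    + apply (@ex_RInt_continuous R_CompleteNormedModule); intros.
      apply (@ex_derive_continuous R_AbsRing R_NormedModule). auto_derive. auto.
    + intros x _. apply Rmult_le_compat_l; auto. apply Rmin_r.
    + rewrite int_lin2. right. field.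
  - subst e. rewrite RInt_point. unfold zero; simpl. replace (c-c) with 0 by ring.
    right; field.
Qed.

Lemma key (a b c e K : R) : a <= c -> c <= e -> e <= b -> 0 <= K ->
  (c = a \/ e = b \/ c = e) ->
  RInt (fun t => K * Rmin (t-a) (b-t)) c e + RInt (fun t => K * Rmin (t-a) (b-t)) c e <= K * ((e-c)*(e-c)).
Proof. intros. pose proof (key0 a b c e K H H0 H1 H2 H3). simpl in H4. lra. Qed.

Close Scope R_scope.
From mathcomp Require Import all_boot all_order all_algebra.
From mathcomp Require Import Rstruct.
From mathcomp Require Import lra.
Import Order.TTheory GRing.Theory Num.Theory.
Local Open Scope ring_scope.

Ltac mm := repeat match goal with
  | |- context[Num.min ?x ?y] => case: (leP x y)
  | |- context[Num.max ?x ?y] => case: (leP x y)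
  end.

Lemma fb (a b lo hi : R) : lo <= hi -> a <= b -> Num.max a lo <= Num.min b hi ->
  Num.min (Num.max b lo) hi = Num.min b hi.
Proof. mm; intros; lra. Qed.
Lemma fa (a b lo hi : R) : lo <= hi -> a <= b -> Num.max a lo <= Num.min b hi ->
  Num.min (Num.max a lo) hi = Num.max a lo.
Proof. mm; intros; lra. Qed.
Lemma fel (a b lo hi : R) : lo <= hi -> Num.min b hi - Num.max a lo <= hi - lo.
Proof. mm; intros; lra. Qed.
Lemma lohi (x : R) : Num.min 0 x <= Num.max 0 x.
Proof. mm; intros; lra. Qed.

Lemma interval_bound (a b x : R) : a <= b -> ~~ (a < x < b) ->
  (b - a) ^+ 2 * mass a b (Num.min 0 x) (Num.max 0 x) <=
  2 * (Num.max 0 x - Num.min 0 x) *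
   (Num.min (Num.max b (Num.min 0 x)) (Num.max 0 x) - Num.min (Num.max a (Num.min 0 x)) (Num.max 0 x)).
Proof.
move=> hab hx.
rewrite /mass /=.
set lo := Num.min 0 x; set hi := Num.max 0 x.
set c := Num.max a lo; set e := Num.min b hi.
case: ifP => hce.
- have hK : 0 <= 4 / (b - a) ^+ 2 by apply: divr_ge0 => //; apply: sqr_ge0.
  have KE : Rdiv 4 ((b - a) ^+ 2) = 4 / (b - a) ^+ 2.
    by rewrite RdivE IZRposE INRE.
  set K := Rdiv 4 ((b - a) ^+ 2).
  rewrite -KE -/K in hK.
  rewrite (_ : Pab a b = fun t => Rmult K (Rmin (t - a) (b - t))); last first.
    apply: functional_extensionality => t. rewrite /Pab -RminE. reflexivity.
  have hx' : (x <= a) || (b <= x) by rewrite negb_and -!leNgt in hx.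
  have hdis : c = a \/ e = b \/ c = e.
    move: hce; rewrite /c /e /lo /hi.
    case/orP: hx' => hx'; case: (leP 0 x) => h0 h1.
    + by right; right; move: h1; mm; intros; lra.
    + by left; move: h1; mm; intros; lra.
    + by right; left; move: h1; mm; intros; lra.
    + by right; right; move: h1; mm; intros; lra.
  have h1 : Rle a c by apply/RleP; rewrite /c; mm; intros; lra.
  have h2 : Rle c e by apply/RleP.
  have h3 : Rle e b by apply/RleP; rewrite /e; mm; intros; lra.
  have h4 : Rle 0 K by apply/RleP.
  have := key a b c e K h1 h2 h3 h4 hdis.
  set I := RInt _ c e => /RleP hI.
  have hlh : lo <= hi by apply: lohi.
  rewrite (fb a b lo hi hlh hab hce) (fa a b lo hi hlh hab hce).
  have hel : e - c <= hi - lo by apply: (fel a b lo hi hlh).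
  have hce' : 0 <= e - c by rewrite subr_ge0.
  have [w0|w0] := eqVneq (b - a) 0.
    rewrite w0 expr0n /= mul0r; apply: mulr_ge0 => //; apply: mulr_ge0 => //; lra.
  have := ler_wpM2l (sqr_ge0 (b - a)) hI.
  rewrite mulrA (mulrC _ K) /K KE divfK ?sqrf_eq0 // mulrDr => hI2.
  have hq := ler_wpM2r hce' hel. have hI3 : (b - a) ^+ 2 * I + (b - a) ^+ 2 * I <= 4 * ((e - c) * (e - c)) by exact: hI2. move: hI3 hq; set W := (b - a) ^+ 2 * I; set q := (e - c) * (e - c); intros; rewrite -/c -/e -mulrA; lra.
- rewrite mulr0.
  rewrite /c /e /lo /hi in hce * ; move: hce hab => _ hab.
  apply: mulr_ge0; first (apply: mulr_ge0 => //; mm; intros; lra).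
  rewrite subr_ge0; mm; intros; lra.
Qed.
Lemma mem_zip1 (s t : seq R) ab : ab \in zip s t -> ab.1 \in s.
Proof.
elim: s t => [|h s IH] [|h' t] //=.
rewrite !in_cons => /orP [/eqP -> /=|H]; first by rewrite eqxx.
by rewrite (IH _ H) orbT.
Qed.

Lemma sorted_zip (s : seq R) : sorted <=%R s -> forall ab, ab \in zip s (behead s) ->
  ab.1 <= ab.2 /\ (forall y, y \in s -> (y <= ab.1) || (ab.2 <= y)).
Proof.
elim: s => [//|h t IH] /= hs ab.
case: t IH hs => [//|h2 t2] IH /= hs.
rewrite in_cons => /orP [/eqP -> /=|hin].
- move: hs => /andP [hh2 hs2]; split => // y.
  rewrite in_cons => /orP [/eqP ->|hy]; first by rewrite lexx.
  apply/orP; right.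
  have := order_path_min (@le_trans _ R) hs2.
  rewrite inE in hy; case/orP: hy => [/eqP -> //|hy] /allP H.
  exact: H.
- have hs' : path <=%R h2 t2 by case/andP: hs.
  have [H1 H2] := IH hs' ab hin.
  split => // y; rewrite in_cons => /orP [/eqP ->|hy]; last exact: H2.
  have hmem : ab.1 \in h2 :: t2 by exact: (mem_zip1 _ _ _ hin).
  have := order_path_min (@le_trans _ R) (hs : path <=%R h (h2 :: t2)).
  move=> /allP /(_ _ hmem) ->. by [].
Qed.

Lemma telesc (f : R -> R) (s : seq R) :
  \sum_(ab <- zip s (behead s)) (f ab.2 - f ab.1) = if s is h :: t then f (last h t) - f h else 0.
Proof.
elim: s => [|h t IH]; first by rewrite big_nil.
case: t IH => [|h2 t2] IH /=; first by rewrite big_nil subrr.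
rewrite big_cons /= IH /=. lra.
Qed.

Lemma fbound (y lo hi : R) : lo <= hi -> lo <= Num.min (Num.max y lo) hi <= hi.
Proof. mm; intros; apply/andP; split; lra. Qed.

Lemma sqlohi (x : R) : (Num.max 0 x - Num.min 0 x) ^+ 2 = x ^+ 2.
Proof. mm; intros; rewrite ?subr0 ?sub0r ?sqrrN //; lra. Qed.

Lemma dim_bound (d : nat) (V : seq 'rV[R]_d) (p : 'rV[R]_d) (i : 'I_d) : p \in V ->
  \sum_(ab <- intervals V i) (ab.2 - ab.1) ^+ 2 *
     mass ab.1 ab.2 (Num.min 0 (p ord0 i)) (Num.max 0 (p ord0 i)) <= 2 * p ord0 i ^+ 2.
Proof.
move=> pV.
rewrite /intervals.
set s := projs V i; set x := p ord0 i.
have hs : sorted <=%R s by apply: sort_sorted; exact: le_total.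
have hx : x \in s by rewrite mem_sort mem_undup; apply: (map_f (fun v : 'rV[R]_d => v ord0 i)).
set lo := Num.min 0 x; set hi := Num.max 0 x.
have hlh : lo <= hi by apply: lohi.
set f := fun y : R => Num.min (Num.max y lo) hi.
apply: (@le_trans _ _ (\sum_(ab <- zip s (behead s)) (2 * (hi - lo)) * (f ab.2 - f ab.1))).
  rewrite big_seq [X in _ <= X]big_seq; apply: ler_sum => ab hab.
  have [h1 h2] := sorted_zip s hs ab hab.
  apply: interval_bound => //.
  by have := h2 x hx; rewrite negb_and -!leNgt.
rewrite -mulr_sumr telesc -sqlohi -/lo -/hi expr2 mulrA.
apply: ler_wpM2l; first by apply: mulr_ge0 => //; rewrite subr_ge0.
case: (s) => [|h t]; first by rewrite subr_ge0.
have := fbound (last h t) lo hi hlh; have := fbound h lo hi hlh.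
rewrite /f => /andP [? ?] /andP [? ?]; lra.
Qed.

Theorem lemma4p3 (d : nat) (V : seq 'rV[R]_d) (p : 'rV[R]_d) :
  (exists u v, [/\ u \in V, v \in V & u != v]) ->
  p \in V ->
  prob_between V p <= 2 * sqnorm p / L2 V.
Proof.
move=> _ pV.
rewrite /prob_between /sqnorm.
have L0 : 0 <= L2 V.
  by apply: sumr_ge0 => i _; apply: sumr_ge0 => ab _; apply: sqr_ge0.
rewrite mulr_sumr mulr_suml.
apply: ler_sum => i _.
have -> : \sum_(ab <- intervals V i) (ab.2 - ab.1) ^+ 2 / L2 V *
     mass ab.1 ab.2 (Num.min 0 (p ord0 i)) (Num.max 0 (p ord0 i)) =
  (\sum_(ab <- intervals V i) (ab.2 - ab.1) ^+ 2 *
     mass ab.1 ab.2 (Num.min 0 (p ord0 i)) (Num.max 0 (p ord0 i))) / L2 V.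
  by rewrite mulr_suml; apply: eq_bigr => ab _; rewrite mulrAC.
apply: ler_wpM2r; first by rewrite invr_ge0.
exact: dim_bound.
Qed.
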